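(* Let $N$ be a positive integer and, for $t>-\log N$, let $\theta(t,N)=\lim_{n\to\infty}\Big(\int_N^n\frac{dx}{t+\log x}-\sum_{j=N}^{n-1}\frac{1}{H_j-\gamma+t}\Big)$. Then $t\mapsto\theta(t,N)$ is strictly totally monotone on $(-\log N,\infty)$, and for every nonnegative integer $k$ and every $t>-\log N$, $$(-1)^k\frac{d^k}{dt^k}\theta(t,N)=k!\lim_{n\to\infty}\Big(\int_N^n\frac{dx}{(t+\log x)^{k+1}}-\sum_{j=N}^{n-1}\frac{1}{(H_j-\gamma+t)^{k+1}}\Big)>0.$$
   Context: $\gamma$ is the Euler–Mascheroni constant and $H_j=\sum_{i=1}^j1/i$. A real function $f$ on an interval $I$ is strictly totally monotone on $I$ if it is continuous on $I$, infinitely differentiable on the interior of $I$, and $(-1)^kf^{(k)}(x)>0$ for all $x$ in the interior of $I$ and all integers $k\ge0$. *)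

(* Defs.v *)
From Stdlib Require Import Reals Lra Lia List ClassicalEpsilon.
Import ListNotations.
Open Scope R_scope.

Definition harm (j : nat) : R :=
  fold_right Rplus 0 (map (fun i => / INR i) (seq 1 j)).

(* Finite sum  sum_{j=N}^{n-1} f j  (empty if n <= N). *)
Definition ssum (f : nat -> R) (N n : nat) : R :=
  fold_right Rplus 0 (map f (seq N (n - N))).

(* Riemann integral int_a^b f, as a total function: the Stdlib RiemannInt
   when f is Riemann integrable on [a,b] (the value does not depend on the
   integrability proof), and 0 otherwise (never used below: the integrands
   are continuous on the relevant intervals). *)
Definition RInt (f : R -> R) (a b : R) : R :=
  match excluded_middle_informative (inhabited (Riemann_integrable f a b)) with
  | left h => RiemannInt (epsilon h (fun _ => True))
  | right _ => 0
  end.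

(* The n-th term of the sequence whose limit (n -> oo) defines, for k = 0,
   theta(t,N), and in general the limit appearing in the k-th derivative:
   int_N^n dx/(t+log x)^(k+1) - sum_{j=N}^{n-1} 1/(H_j - gamma + t)^(k+1). *)
Definition theta_term (gamma : R) (k : nat) (t : R) (N n : nat) : R :=
  RInt (fun x => / (t + ln x) ^ (S k)) (INR N) (INR n)
  - ssum (fun j => / (harm j - gamma + t) ^ (S k)) N n.

(* Main.v *)
Require Import Defs.
From Stdlib Require Import Reals Arith Lra Lia List ClassicalEpsilon ZArith FunctionalExtensionality.
From Coquelicot Require Import Coquelicot.
Open Scope R_scope.


Lemma fold_plus_shift (l : list R) (s : R) :
  fold_right Rplus s l = fold_right Rplus 0 l + s.
Proof. induction l as [|x l IH]; simpl; [ring| rewrite IH; ring]. Qed.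

Lemma harm_S n : harm (S n) = harm n + / INR (S n).
Proof.
  unfold harm. rewrite seq_S, map_app, fold_right_app. simpl.
  rewrite fold_plus_shift. replace (1 + n)%nat with (S n) by lia. ring.
Qed.

Lemma ssum_S f N n : (N <= n)%nat -> ssum f N (S n) = ssum f N n + f n.
Proof.
  intro H. unfold ssum. replace (S n - N)%nat with (S (n - N)) by lia.
  rewrite seq_S, map_app, fold_right_app. simpl.
  rewrite fold_plus_shift. replace (N + (n - N))%nat with n by lia. ring.
Qed.

Lemma ssum_0 f N : ssum f N N = 0.
Proof. unfold ssum. rewrite Nat.sub_diag. reflexivity. Qed.

Lemma ssum_lin (A B C : nat -> R) c N n :
  ssum (fun j => A j - B j + c * C j) N n = ssum A N n - ssum B N n + c * ssum C N n.
Proof.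
  unfold ssum. generalize (seq N (n - N)). intro l.
  induction l as [|x l IH]; simpl; [ring| rewrite IH; ring].
Qed.

Lemma ln_ineq2 x : 0 < x < 1 -> 2 * x < ln (1 + x) - ln (1 - x).
Proof.
  intro Hx.
  set (phi := fun y => ln (1 + y) - ln (1 - y) - 2 * y).
  set (phi' := fun y => / (1 + y) + / (1 - y) - 2).
  destruct (MVT_cor2 phi phi' 0 x) as [c [Hc1 Hc2]]; [lra| |].
  - intros c Hc. apply is_derive_Reals. unfold phi, phi'.
    auto_derive; [repeat split; lra|].
    field; lra.
  - unfold phi in Hc1. rewrite Rplus_0_r, Rminus_0_r, ln_1 in Hc1.
    assert (phi' c > 0).
    { unfold phi'. replace (/ (1 + c) + / (1 - c) - 2) with (2 * c * c / ((1+c)*(1-c))) by (field; lra).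
      apply Rdiv_lt_0_compat; nra. }
    nra.
Qed.

Lemma ln_le_x1 x : 0 < x -> ln (1 + x) <= x.
Proof.
  intro H. rewrite <- (ln_exp x) at 2. apply Rlt_le, ln_increasing; [lra|].
  apply exp_ineq1; lra.
Qed.

Lemma cv_close (u v : nat -> R) l :
  Un_cv u l -> (forall eps, eps > 0 -> exists M, forall n, (n >= M)%nat -> Rabs (v n - u n) < eps) ->
  Un_cv v l.
Proof.
  intros Hu Hc eps He.
  destruct (Hu (eps/2)) as [M1 H1]; [lra|].
  destruct (Hc (eps/2)) as [M2 H2]; [lra|].
  exists (max M1 M2). intros n Hn. unfold Rdist in *.
  specialize (H1 n ltac:(lia)). specialize (H2 n ltac:(lia)).
  replace (v n - l) with ((v n - u n) + (u n - l)) by ring.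
  eapply Rle_lt_trans; [apply Rabs_triang|]. lra.
Qed.

Lemma small_inv eps : eps > 0 -> exists M, forall n, (n >= M)%nat -> / INR n < eps.
Proof.
  intro He. destruct (archimed (/ eps)) as [H1 _].
  assert (0 <= IZR (up (/ eps))). { assert (0 < / eps) by (apply Rinv_0_lt_compat; lra). lra. }
  exists (S (Z.to_nat (up (/eps)))). intros n Hn.
  assert (Hn' : IZR (up (/eps)) + 1 <= INR n).
  { rewrite <- (Z2Nat.id (up (/eps))) at 1 by (apply le_IZR; lra).
    rewrite <- INR_IZR_INZ. rewrite <- S_INR. apply le_INR. lia. }
  assert (0 < INR n) by lra.
  rewrite <- (Rinv_inv eps). apply Rinv_lt_contravar.
  - apply Rmult_lt_0_compat; [apply Rinv_0_lt_compat; lra| lra].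
  - lra.
Qed.

Lemma ln_shift_small (c : R) : 0 < c <= 1 ->
  forall eps, eps > 0 -> exists M, forall n, (n >= M)%nat ->
   Rabs (ln (INR n + c) - ln (INR n)) < eps.
Proof.
  intros Hc eps He. destruct (small_inv eps He) as [M HM].
  exists (S M). intros n Hn. specialize (HM n ltac:(lia)).
  assert (Hpos : 1 <= INR n) by (replace 1 with (INR 1) by reflexivity; apply le_INR; lia).
  replace (ln (INR n + c) - ln (INR n)) with (ln (1 + c / INR n)).
  2:{ rewrite <- ln_div by lra. f_equal. field. lra. }
  assert (0 < c / INR n) by (apply Rdiv_lt_0_compat; lra).
  assert (0 < ln (1 + c / INR n)) by (rewrite <- ln_1; apply ln_increasing; lra).
  rewrite Rabs_right by lra.
  eapply Rle_lt_trans; [apply ln_le_x1; lra|].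
  eapply Rle_lt_trans; [|apply HM]. unfold Rdiv. rewrite <- (Rmult_1_l (/ INR n)) at 2.
  apply Rmult_le_compat_r; [left; apply Rinv_0_lt_compat; lra| lra].
Qed.

Section Harm.
Variable gamma : R.
Hypothesis Hg : Un_cv (fun n => harm n - ln (INR n)) gamma.

Lemma harm_upper j : harm j - gamma <= ln (INR j + 1).
Proof.
  set (v := fun n => harm n - ln (INR n + 1)).
  assert (Hv : Un_cv v gamma).
  { apply (cv_close _ _ _ Hg). intros eps He.
    destruct (ln_shift_small 1 ltac:(lra) eps He) as [M HM]. exists M. intros n Hn.
    unfold v. replace (harm n - ln (INR n + 1) - (harm n - ln (INR n))) with
      (- (ln (INR n + 1) - ln (INR n))) by ring. rewrite Rabs_Ropp. auto. }
  assert (Hgr : Un_growing v).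
  { intro n. unfold v. rewrite harm_S, S_INR.
    assert (0 <= INR n) by apply pos_INR.
    assert (ln (INR n + 1 + 1) - ln (INR n + 1) <= / (INR n + 1)).
    { replace (ln (INR n + 1 + 1) - ln (INR n + 1)) with (ln (1 + / (INR n + 1))).
      2:{ rewrite <- ln_div by lra. f_equal. field. lra. }
      apply ln_le_x1. apply Rinv_0_lt_compat; lra. }
    lra. }
  pose proof (growing_ineq v gamma Hgr Hv j). unfold v in H. lra.
Qed.

Lemma harm_lower j : ln (INR j + / 2) < harm j - gamma.
Proof.
  set (v := fun n => harm n - ln (INR n + / 2)).
  assert (Hv : Un_cv v gamma).
  { apply (cv_close _ _ _ Hg). intros eps He.
    destruct (ln_shift_small (/2) ltac:(lra) eps He) as [M HM]. exists M. intros n Hn.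
    unfold v. replace (harm n - ln (INR n + /2) - (harm n - ln (INR n))) with
      (- (ln (INR n + /2) - ln (INR n))) by ring. rewrite Rabs_Ropp. auto. }
  assert (Hst : forall n, v (S n) < v n).
  { intro n. unfold v. rewrite harm_S, S_INR.
    assert (0 <= INR n) by apply pos_INR.
    set (x := / (2 * (INR n + 1))).
    assert (Hx : 0 < x < 1).
    { unfold x. split. apply Rinv_0_lt_compat; lra.
      rewrite <- Rinv_1. apply Rinv_lt_contravar; lra. }
    pose proof (ln_ineq2 x Hx).
    replace (ln (1 + x) - ln (1 - x)) with (ln (INR n + 1 + /2) - ln (INR n + /2)) in H0.
    2:{ rewrite <- (ln_div (1 + x)) by lra. rewrite <- ln_div by lra. f_equal.
        assert (Hx2 : (1 - x) * (2 * (INR n + 1)) = 2 * INR n + 1) by (unfold x; field; lra).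
        assert (Hx3 : (1 + x) * (2 * (INR n + 1)) = 2 * INR n + 3) by (unfold x; field; lra).
        apply (Rmult_eq_reg_r ((1 - x) * (INR n + / 2))); [|nra].
        field_simplify; [|lra|lra]. nra. }
    replace (2 * x) with (/ (INR n + 1)) in H0 by (unfold x; field; lra).
    lra. }
  assert (Hdec : Un_decreasing v) by (intro n; left; apply Hst).
  pose proof (decreasing_ineq v gamma Hdec Hv (S j)). pose proof (Hst j).
  unfold v in *. lra.
Qed.
End Harm.

Lemma mvt_bet (g g' : R -> R) lo :
  (forall y, lo <= y -> derivable_pt_lim g y (g' y)) ->
  forall x y, lo <= x -> lo <= y ->
  exists c, lo <= c /\ Rmin x y <= c <= Rmax x y /\ g y - g x = g' c * (y - x).
Proof.
  intros Hd x y Hx Hy.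
  destruct (Rtotal_order x y) as [Hl|[He|Hl]].
  - destruct (MVT_cor2 g g' x y Hl) as [c [H1 H2]].
    { intros c Hc. apply Hd. lra. }
    exists c. rewrite Rmin_left, Rmax_right by lra. repeat split; lra.
  - subst. exists y. rewrite Rmin_left, Rmax_left by lra. repeat split; lra || ring.
  - destruct (MVT_cor2 g g' y x Hl) as [c [H1 H2]].
    { intros c Hc. apply Hd. lra. }
    exists c. rewrite Rmin_right, Rmax_left by lra. repeat split; try lra.
Qed.

Lemma tangent (g g' : R -> R) lo :
  (forall y, lo <= y -> derivable_pt_lim g y (g' y)) ->
  (forall y1 y2, lo <= y1 -> y1 <= y2 -> g' y1 <= g' y2) ->
  forall x y, lo <= x -> lo <= y -> g x + g' x * (y - x) <= g y.
Proof.
  intros Hd Hm x y Hx Hy.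
  destruct (mvt_bet g g' lo Hd x y Hx Hy) as [c [Hc [Hc2 Hc3]]].
  destruct (Rle_lt_dec x y) as [Hl|Hl].
  - rewrite Rmin_left, Rmax_right in Hc2 by lra.
    pose proof (Hm x c Hx ltac:(lra)). nra.
  - rewrite Rmin_right, Rmax_left in Hc2 by lra.
    pose proof (Hm c x Hc ltac:(lra)). nra.
Qed.

Lemma decr_deriv (g g' : R -> R) lo :
  (forall y, lo <= y -> derivable_pt_lim g y (g' y)) ->
  (forall y, lo <= y -> g' y <= 0) ->
  forall x y, lo <= x -> x <= y -> g y <= g x.
Proof.
  intros Hd Hn x y Hx Hxy.
  destruct (mvt_bet g g' lo Hd x y Hx ltac:(lra)) as [c [Hc [Hc2 Hc3]]].
  pose proof (Hn c Hc). nra.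
Qed.

Definition p (k : nat) (s : R) : R := / s ^ (S k).

Lemma p_pos k s : 0 < s -> 0 < p k s.
Proof. intro. unfold p. apply Rinv_0_lt_compat, pow_lt; lra. Qed.

Lemma p_deriv k s : 0 < s -> derivable_pt_lim (p k) s (- INR (S k) * p (S k) s).
Proof.
  intro Hs. apply is_derive_Reals. unfold p.
  assert (s ^ S k <> 0) by (apply pow_nonzero; lra).
  auto_derive; [auto|].
  rewrite <- !tech_pow_Rmult. assert (s ^ k <> 0) by (apply pow_nonzero; lra). change (match k with | 0%nat => 1 | S _ => INR k + 1 end) with (INR (S k)). field. split; auto; lra.
Qed.

Lemma pow_lt_S x y n : 0 <= x -> x < y -> x ^ S n < y ^ S n.
Proof.
  intros H1 H2. induction n as [|n IH]; [simpl; lra|].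
  change (x * x ^ S n < y * y ^ S n).
  assert (0 <= x ^ S n) by (apply pow_le; lra).
  apply Rle_lt_trans with (x * y ^ S n); [apply Rmult_le_compat_l; lra|].
  apply Rmult_lt_compat_r; [apply pow_lt; lra| lra].
Qed.

Lemma p_lt k s1 s2 : 0 < s1 -> s1 < s2 -> p k s2 < p k s1.
Proof.
  intros H1 H2. unfold p. apply Rinv_lt_contravar.
  - apply Rmult_lt_0_compat; apply pow_lt; lra.
  - apply pow_lt_S; lra.
Qed.

Lemma p_le k s1 s2 : 0 < s1 -> s1 <= s2 -> p k s2 <= p k s1.
Proof.
  intros H1 H2. destruct (Req_dec s1 s2); [subst; lra|]. left; apply p_lt; lra.
Qed.

Lemma RInt_bridge F a b : ex_RInt F a b -> Defs.RInt F a b = RInt F a b.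
Proof.
  intro H. unfold Defs.RInt.
  destruct (excluded_middle_informative _) as [h|n].
  - symmetry. apply RInt_Reals.
  - exfalso. apply n. constructor. apply ex_RInt_Reals_0. exact H.
Qed.

Lemma ex_RInt_cont F lo a b :
  (forall x, lo <= x -> continuity_pt F x) -> lo <= a -> lo <= b -> ex_RInt F a b.
Proof.
  intros Hc Ha Hb. apply (ex_RInt_continuous (V := R_CompleteNormedModule)). intros z Hz.
  apply continuity_pt_filterlim. apply Hc.
  assert (lo <= Rmin a b) by (apply Rmin_glb; lra). lra.
Qed.

Lemma RInt_const_R (a b c : R) : RInt (fun _ => c) a b = (b - a) * c.
Proof. rewrite RInt_const. reflexivity. Qed.

Lemma RInt_Chasles_R F a b c : ex_RInt F a b -> ex_RInt F b c ->
  RInt F a b + RInt F b c = RInt F a c.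
Proof. intros. rewrite <- (RInt_Chasles F a b c) by auto. reflexivity. Qed.

Lemma INR_le_N (N j : nat) : (N <= j)%nat -> INR N <= INR j.
Proof. intro; apply le_INR; auto. Qed.

Section Gen.
Variable N : nat.
Hypothesis HN : (1 <= N)%nat.
Variable a : nat -> R.
Hypothesis Ha : forall j, (N <= j)%nat -> ln (INR j) <= a j <= ln (INR (S j)).
Variables (F : R -> R) (g : nat -> R) (rho : R -> R).
Hypothesis Fc : forall x, INR N <= x -> continuity_pt F x.
Hypothesis Fr : forall x, INR N <= x -> F x = rho (ln x).
Hypothesis gr : forall j, (N <= j)%nat -> g j = rho (a j).
Hypothesis rm : forall c1 c2, ln (INR N) <= c1 -> c1 <= c2 -> rho c2 <= rho c1.

Definition Dn n := Defs.RInt F (INR N) (INR n) - ssum g N n.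

Lemma INR_N_pos : 0 < INR N.
Proof. apply lt_0_INR. lia. Qed.

Lemma D_N : Dn N = 0.
Proof.
  unfold Dn. rewrite ssum_0, RInt_bridge.
  - assert (Hz : RInt F (INR N) (INR N) = 0) by exact (RInt_point (INR N) F). rewrite Hz. ring.
  - apply (ex_RInt_cont F (INR N)); auto; lra.
Qed.

Lemma D_step j : (N <= j)%nat -> Dn (S j) - Dn j = RInt F (INR j) (INR (S j)) - g j.
Proof.
  intro Hj. unfold Dn. rewrite ssum_S by auto.
  assert (H1 := INR_le_N N j Hj). assert (H2 := INR_le_N N (S j) ltac:(lia)).
  rewrite !RInt_bridge by (apply (ex_RInt_cont F (INR N)); auto; lra).
  rewrite <- (RInt_Chasles_R F (INR N) (INR j) (INR (S j)))
    by (apply (ex_RInt_cont F (INR N)); auto; lra).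
  ring.
Qed.

Lemma step_bound j : (N <= j)%nat ->
  rho (ln (INR (S j))) <= RInt F (INR j) (INR (S j)) <= rho (ln (INR j)) /\
  rho (ln (INR (S j))) <= g j <= rho (ln (INR j)).
Proof.
  intro Hj. assert (H1 := INR_le_N N j Hj). assert (H2 := INR_le_N N (S j) ltac:(lia)).
  pose proof INR_N_pos as HN0.
  assert (HS : INR (S j) = INR j + 1) by apply S_INR.
  assert (Hl1 : ln (INR N) <= ln (INR j)) by (apply ln_le; lra).
  assert (Hl2 : ln (INR j) <= ln (INR (S j))) by (apply ln_le; lra).
  assert (Hex : ex_RInt F (INR j) (INR (S j))) by (apply (ex_RInt_cont F (INR N)); auto; lra).
  split; [split|].
  - assert (Ec : @eq R (RInt (fun _ => rho (ln (INR (S j)))) (INR j) (INR (S j))) (rho (ln (INR (S j)))))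
      by (rewrite RInt_const_R; rewrite HS; ring).
    rewrite <- Ec at 1.
    apply RInt_le; auto; [lra| apply ex_RInt_const|].
    intros x Hx. rewrite Fr by lra. apply rm.
    + apply ln_le; lra.
    + apply ln_le; lra.
  - assert (Ec : @eq R (RInt (fun _ => rho (ln (INR j))) (INR j) (INR (S j))) (rho (ln (INR j))))
      by (rewrite RInt_const_R, HS; ring).
    rewrite <- Ec.
    apply RInt_le; auto; [lra| apply ex_RInt_const|].
    intros x Hx. rewrite Fr by lra. apply rm; auto. apply ln_le; lra.
  - rewrite gr by auto. destruct (Ha j Hj). split; apply rm; lra.
Qed.

Lemma tele : forall n m, (N <= n)%nat -> (n <= m)%nat ->
  Rabs (Dn m - Dn n) <= rho (ln (INR n)) - rho (ln (INR m)).
Proof.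
  intros n m Hn. induction m as [|m IH]; intro Hm.
  - replace n with 0%nat by lia. rewrite Rminus_diag, Rabs_R0. lra.
  - destruct (Nat.eq_dec n (S m)) as [->|Hne].
    + rewrite !Rminus_diag, Rabs_R0. lra.
    + specialize (IH ltac:(lia)).
      pose proof (D_step m ltac:(lia)).
      destruct (step_bound m ltac:(lia)) as [[A1 A2] [B1 B2]].
      replace (Dn (S m) - Dn n) with ((Dn (S m) - Dn m) + (Dn m - Dn n)) by ring.
      eapply Rle_trans; [apply Rabs_triang|]. rewrite H.
      assert (Rabs (RInt F (INR m) (INR (S m)) - g m) <= rho (ln (INR m)) - rho (ln (INR (S m)))).
      { apply Rabs_le. lra. }
      lra.
Qed.

End Gen.

Lemma is_derive_eq (f : R -> R) x l l' : is_derive f x l -> l = l' -> is_derive f x l'.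
Proof. intros H <-; exact H. Qed.

Lemma f_deriv k s0 x : 0 < x -> 0 < s0 + ln x ->
  derivable_pt_lim (fun x => p k (s0 + ln x)) x (- INR (S k) * p (S k) (s0 + ln x) * / x).
Proof.
  intros Hx Hs. apply is_derive_Reals.
  assert (Hg : is_derive (fun x => s0 + ln x) x (/ x)).
  { auto_derive; [auto| field; lra]. }
  assert (Hp : is_derive (p k) (s0 + ln x) (- INR (S k) * p (S k) (s0 + ln x))).
  { apply is_derive_Reals. apply p_deriv. auto. }
  eapply is_derive_eq.
  - apply (is_derive_comp (p k) (fun x => s0 + ln x) x _ _ Hp Hg).
  - change (/ x * (- INR (S k) * p (S k) (s0 + ln x)) = - INR (S k) * p (S k) (s0 + ln x) * / x). ring.
Qed.

Lemma f_cont k s0 x : 0 < x -> 0 < s0 + ln x -> continuity_pt (fun x => p k (s0 + ln x)) x.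
Proof.
  intros. apply derivable_continuous_pt. eexists. apply f_deriv; auto.
Qed.

Lemma jensen k s0 N j : (1 <= N)%nat -> (N <= j)%nat -> 0 < s0 + ln (INR N) ->
  p k (s0 + ln (INR j + / 2)) <= RInt (fun x => p k (s0 + ln x)) (INR j) (INR (S j)).
Proof.
  intros HN Hj Hs.
  assert (HN0 : 1 <= INR N) by (replace 1 with (INR 1) by reflexivity; apply le_INR; auto).
  assert (HjN : INR N <= INR j) by (apply le_INR; auto).
  rewrite S_INR.
  set (f := fun x => p k (s0 + ln x)).
  set (f' := fun x => - INR (S k) * p (S k) (s0 + ln x) * / x).
  assert (Hpos : forall x, INR N <= x -> 0 < x /\ 0 < s0 + ln x).
  { intros x Hx. split; [lra|]. assert (ln (INR N) <= ln x) by (apply ln_le; lra). lra. }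
  assert (Hd : forall y, INR N <= y -> derivable_pt_lim f y (f' y)).
  { intros y Hy. destruct (Hpos y Hy). apply f_deriv; auto. }
  assert (Hm : forall y1 y2, INR N <= y1 -> y1 <= y2 -> f' y1 <= f' y2).
  { intros y1 y2 H1 H2. destruct (Hpos y1 H1) as [A1 B1]. destruct (Hpos y2 ltac:(lra)) as [A2 B2].
    unfold f'. assert (Hl : s0 + ln y1 <= s0 + ln y2) by (assert (ln y1 <= ln y2) by (apply ln_le; lra); lra).
    pose proof (p_le (S k) _ _ B1 Hl). pose proof (p_pos (S k) _ B2).
    assert (/ y2 <= / y1) by (apply Rinv_le_contravar; lra).
    assert (0 < / y2) by (apply Rinv_0_lt_compat; lra).
    assert (0 < INR (S k)) by (apply lt_0_INR; lia).
    assert (p (S k) (s0 + ln y2) * / y2 <= p (S k) (s0 + ln y1) * / y1).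
    { apply Rmult_le_compat; lra. }
    nra. }
  set (m := INR j + / 2).
  assert (Hmm : INR N <= m) by (unfold m; lra).
  set (G := fun x => f m * x + f' m * ((x - m) ^ 2 / 2)).
  assert (HI : is_RInt (fun x => f m + f' m * (x - m)) (INR j) (INR j + 1)
                 (minus (G (INR j + 1)) (G (INR j)))).
  { apply (is_RInt_derive (V := R_CompleteNormedModule)).
    - intros x _. unfold G. auto_derive; [auto| match goal with |- ?a = ?b => change (@eq R a b) end; field].
    - intros x _. apply continuity_pt_filterlim.
      apply derivable_continuous_pt. eexists. apply is_derive_Reals.
      auto_derive; [auto| reflexivity]. }
  apply (is_RInt_unique (V := R_CompleteNormedModule)) in HI.
  assert (HG : @eq R (minus (G (INR j + 1)) (G (INR j))) (f m)).
  { change (G (INR j + 1) - G (INR j) = f m). unfold G, m. field. }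
  change (f m <= RInt f (INR j) (INR j + 1)).
  rewrite <- HG, <- HI.
  apply RInt_le; [lra| | |].
  - apply (ex_RInt_continuous (V := R_CompleteNormedModule)). intros x _.
    apply continuity_pt_filterlim.
    apply derivable_continuous_pt. eexists. apply is_derive_Reals.
    auto_derive; [auto| reflexivity].
  - apply (ex_RInt_cont f (INR N)); [|lra|lra].
    intros x Hx. destruct (Hpos x Hx). apply f_cont; auto.
  - intros x Hx. apply (tangent f f' (INR N)); auto; lra.
Qed.

Lemma p_le_inv k s : 1 <= s -> p k s <= / s.
Proof.
  intro H. unfold p. apply Rinv_le_contravar; [lra|].
  change (s <= s * s ^ k). assert (1 <= s ^ k) by (apply pow_R1_Rle; lra). nra.
Qed.

Lemma eventually_small k t eps : eps > 0 ->
  exists M, forall n, (n >= M)%nat -> 0 < t + ln (INR n) /\ p k (t + ln (INR n)) < eps.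
Proof.
  intro He. set (B := Rmax 1 (2 / eps)).
  assert (HB1 : 1 <= B) by apply Rmax_l. assert (HB2 : 2 / eps <= B) by apply Rmax_r.
  assert (He' : / exp (B - t) > 0) by (apply Rlt_gt, Rinv_0_lt_compat, exp_pos).
  destruct (small_inv _ He') as [M HM]. exists (S M). intros n Hn.
  specialize (HM n ltac:(lia)).
  assert (Hn0 : 0 < INR n) by (apply lt_0_INR; lia).
  assert (Hex : exp (B - t) < INR n).
  { rewrite <- (Rinv_inv (INR n)). rewrite <- (Rinv_inv (exp (B - t))).
    apply Rinv_lt_contravar; [|exact HM].
    apply Rmult_lt_0_compat; apply Rinv_0_lt_compat; [lra| apply exp_pos]. }
  assert (Hl : B - t < ln (INR n)).
  { rewrite <- (ln_exp (B - t)). apply ln_increasing; [apply exp_pos| lra]. }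
  split; [lra|].
  eapply Rle_lt_trans; [apply p_le_inv; lra|].
  apply Rle_lt_trans with (/ B).
  - apply Rinv_le_contravar; lra.
  - assert (2 / eps > 0) by (unfold Rdiv; apply Rmult_gt_0_compat; [lra| apply Rinv_0_lt_compat; lra]).
    apply Rle_lt_trans with (/ (2 / eps)).
    + apply Rinv_le_contravar; lra.
    + replace (/ (2 / eps)) with (eps / 2) by (field; lra). lra.
Qed.

Lemma lim_ge_ev (u : nat -> R) l c M : Un_cv u l -> (forall n, (n >= M)%nat -> c <= u n) -> c <= l.
Proof.
  intros Hu Hc. destruct (Rle_lt_dec c l) as [H|H]; auto.
  destruct (Hu (c - l)) as [M1 H1]; [lra|].
  specialize (H1 (max M M1) ltac:(lia)). specialize (Hc (max M M1) ltac:(lia)).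
  unfold Rdist in H1. apply Rabs_def2 in H1. lra.
Qed.

Lemma lim_abs_le_ev (u : nat -> R) l c M : Un_cv u l -> (forall n, (n >= M)%nat -> Rabs (u n) <= c) -> Rabs l <= c.
Proof.
  intros Hu Hc. destruct (Rle_lt_dec (Rabs l) c) as [H|H]; auto.
  destruct (Hu (Rabs l - c)) as [M1 H1]; [lra|].
  specialize (H1 (max M M1) ltac:(lia)). specialize (Hc (max M M1) ltac:(lia)).
  unfold Rdist in H1. 
  pose proof (Rabs_triang_inv l (u (max M M1))).
  rewrite <- Rabs_Ropp in H1. replace (- (u (max M M1) - l)) with (l - u (max M M1)) in H1 by ring.
  lra.
Qed.

Section Main.
Variable gamma : R.
Hypothesis Hg : Un_cv (fun n => harm n - ln (INR n)) gamma.
Variable N : nat.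
Hypothesis HN : (1 <= N)%nat.

Definition aa j := harm j - gamma.

Lemma Ha_main : forall j, (N <= j)%nat -> ln (INR j) <= aa j <= ln (INR (S j)).
Proof.
  intros j Hj. unfold aa. pose proof (harm_lower gamma Hg j). pose proof (harm_upper gamma Hg j).
  assert (0 < INR j) by (apply lt_0_INR; lia).
  assert (ln (INR j) <= ln (INR j + / 2)) by (apply ln_le; lra).
  rewrite S_INR. lra.
Qed.

Lemma lnN_le x : INR N <= x -> ln (INR N) <= ln x.
Proof. intro. apply ln_le; auto. apply lt_0_INR; lia. Qed.

Lemma INRN_pos : 1 <= INR N.
Proof. replace 1 with (INR 1) by reflexivity. apply le_INR; auto. Qed.

Section Fixed.
Variable k : nat.
Variable t : R.
Hypothesis Ht : - ln (INR N) < t.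

Let F := fun x => p k (t + ln x).
Let g := fun j => / (harm j - gamma + t) ^ (S k).
Let rho := fun c => p k (t + c).

Lemma Fc_main : forall x, INR N <= x -> continuity_pt F x.
Proof.
  intros x Hx. pose proof INRN_pos. pose proof (lnN_le x Hx). apply f_cont; lra.
Qed.

Lemma gr_main : forall j, (N <= j)%nat -> g j = rho (aa j).
Proof. intros j Hj. unfold g, rho, aa, p. f_equal. f_equal. ring. Qed.

Lemma rm_main : forall c1 c2, ln (INR N) <= c1 -> c1 <= c2 -> rho c2 <= rho c1.
Proof. intros c1 c2 H1 H2. unfold rho. apply p_le; lra. Qed.

Lemma tele_main n m : (N <= n)%nat -> (n <= m)%nat ->
  Rabs (theta_term gamma k t N m - theta_term gamma k t N n) <= rho (ln (INR n)) - rho (ln (INR m)).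
Proof.
  intros. apply (tele N HN aa Ha_main F g rho Fc_main (fun x _ => eq_refl) gr_main rm_main); auto.
Qed.

Lemma conv_main : exists l, Un_cv (fun n => theta_term gamma k t N n) l.
Proof.
  assert (Hc : Cauchy_crit (fun n => theta_term gamma k t N n)).
  { intros eps He. destruct (eventually_small k t eps He) as [M HM].
    exists (max M N). intros n m Hn Hm. unfold Rdist.
    assert (Hgen : forall n m, (n >= max M N)%nat -> (n <= m)%nat ->
              Rabs (theta_term gamma k t N m - theta_term gamma k t N n) < eps).
    { intros n0 m0 H0 H1. eapply Rle_lt_trans; [apply tele_main; lia|].
      destruct (HM n0 ltac:(lia)). destruct (HM m0 ltac:(lia)).
      pose proof (p_pos k _ H3). unfold rho. lra. }
    destruct (Nat.le_ge_cases n m).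
    - rewrite <- Rabs_Ropp. replace (- _) with (theta_term gamma k t N m - theta_term gamma k t N n) by ring.
      apply Hgen; lia.
    - apply Hgen; lia. }
  destruct (Rcomplete.R_complete _ Hc) as [l Hl]. exists l. exact Hl.
Qed.

Lemma pos_main l : Un_cv (fun n => theta_term gamma k t N n) l -> 0 < l.
Proof.
  intro Hl.
  assert (Hd : forall j, (N <= j)%nat -> 0 < RInt F (INR j) (INR (S j)) - g j).
  { intros j Hj. pose proof (jensen k t N j HN Hj ltac:(lra)) as J.
    assert (Hj0 : 0 < INR j) by (apply lt_0_INR; lia).
    pose proof (lnN_le (INR j) (le_INR _ _ Hj)).
    assert (ln (INR j) <= ln (INR j + / 2)) by (apply ln_le; lra).
    pose proof (harm_lower gamma Hg j).
    rewrite (gr_main j Hj). unfold rho, aa.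
    pose proof (p_lt k (t + ln (INR j + / 2)) (t + (harm j - gamma)) ltac:(lra) ltac:(lra)).
    unfold F. lra. }
  assert (Hinc : forall n, (n >= S N)%nat -> theta_term gamma k t N (S N) <= theta_term gamma k t N n).
  { intros n Hn. induction n as [|n IH]; [lia|].
    destruct (Nat.eq_dec n N) as [->|Hne]; [lra|].
    specialize (IH ltac:(lia)).
    pose proof (D_step N HN F g Fc_main n ltac:(lia)) as DS.
    change (Dn N F g (S n) - Dn N F g n = RInt F (INR n) (INR (S n)) - g n) in DS.
    pose proof (Hd n ltac:(lia)).
    change (theta_term gamma k t N (S N) <= Dn N F g (S n)).
    change (theta_term gamma k t N (S N) <= Dn N F g n) in IH. lra. }
  assert (H0 : 0 < theta_term gamma k t N (S N)).
  { pose proof (D_step N HN F g Fc_main N ltac:(lia)) as DS.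
    pose proof (D_N N F g Fc_main) as D0.
    pose proof (Hd N ltac:(lia)).
    change (0 < Dn N F g (S N)). lra. }
  pose proof (lim_ge_ev _ l _ (S N) Hl Hinc). lra.
Qed.

End Fixed.
End Main.

Lemma RInt_lin3 (f g h : R -> R) c a b :
  ex_RInt f a b -> ex_RInt g a b -> ex_RInt h a b ->
  RInt (fun x => f x - g x + c * h x) a b = RInt f a b - RInt g a b + c * RInt h a b.
Proof.
  intros Hf Hg Hh.
  pose proof (is_RInt_plus _ _ a b _ _
     (is_RInt_minus _ _ a b _ _ (RInt_correct (V := R_CompleteNormedModule) f a b Hf)
                                (RInt_correct (V := R_CompleteNormedModule) g a b Hg))
     (is_RInt_scal _ a b c _ (RInt_correct (V := R_CompleteNormedModule) h a b Hh))) as H.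
  apply (is_RInt_unique (V := R_CompleteNormedModule)) in H. exact H.
Qed.

Lemma p_deriv_shift k a0 c : 0 < a0 + c ->
  derivable_pt_lim (fun c => p k (a0 + c)) c (- INR (S k) * p (S k) (a0 + c)).
Proof.
  intro H. apply is_derive_Reals.
  assert (Hg : is_derive (fun c => a0 + c) c 1) by (auto_derive; [auto| ring]).
  assert (Hp : is_derive (p k) (a0 + c) (- INR (S k) * p (S k) (a0 + c))).
  { apply is_derive_Reals. apply p_deriv. auto. }
  eapply is_derive_eq.
  - apply (is_derive_comp (p k) (fun c => a0 + c) c _ _ Hp Hg).
  - change (1 * (- INR (S k) * p (S k) (a0 + c)) = - INR (S k) * p (S k) (a0 + c)). ring.
Qed.

Definition psi1 k s := - INR (S k) * p (S k) s.
Definition psi2 k s := INR (S k) * INR (S (S k)) * p (S (S k)) s.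

Lemma psi1_deriv k s : 0 < s -> derivable_pt_lim (psi1 k) s (psi2 k s).
Proof.
  intro H. pose proof (derivable_pt_lim_scal _ (- INR (S k)) _ _ (p_deriv (S k) s H)) as D.
  unfold psi1, psi2. replace (INR (S k) * INR (S (S k)) * p (S (S k)) s)
    with (- INR (S k) * (- INR (S (S k)) * p (S (S k)) s)) by ring. exact D.
Qed.

Lemma psi1_mono k lo s1 s2 : 0 < lo -> lo <= s1 -> s1 <= s2 -> psi1 k s1 <= psi1 k s2.
Proof.
  intros. unfold psi1. pose proof (p_le (S k) s1 s2 ltac:(lra) ltac:(lra)).
  assert (0 < INR (S k)) by (apply lt_0_INR; lia). nra.
Qed.

Lemma mpsi1_deriv k s : 0 < s -> derivable_pt_lim (fun s => - psi1 k s) s (- psi2 k s).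
Proof.
  intro H. pose proof (derivable_pt_lim_scal _ (-1) _ _ (psi1_deriv k s H)) as D.
  unfold mult_real_fct in D.
  replace (- psi2 k s) with (-1 * psi2 k s) by ring.
  replace (fun s => - psi1 k s) with (fun s => -1 * psi1 k s)
    by (apply functional_extensionality; intro; ring).
  exact D.
Qed.

Lemma mpsi2_mono k lo s1 s2 : 0 < lo -> lo <= s1 -> s1 <= s2 -> - psi2 k s1 <= - psi2 k s2.
Proof.
  intros. unfold psi2. pose proof (p_le (S (S k)) s1 s2 ltac:(lra) ltac:(lra)).
  assert (0 < INR (S k)) by (apply lt_0_INR; lia).
  assert (0 < INR (S (S k))) by (apply lt_0_INR; lia).
  assert (0 < INR (S k) * INR (S (S k))) by nra. nra.
Qed.

Section Deriv.
Variable gamma : R.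
Hypothesis Hg : Un_cv (fun n => harm n - ln (INR n)) gamma.
Variable N : nat.
Hypothesis HN : (1 <= N)%nat.
Variable k : nat.
Variable t : R.
Hypothesis Ht : - ln (INR N) < t.

Definition dl := (t + ln (INR N)) / 2.
Definition C0 := psi2 k dl.

Lemma dl_pos : 0 < dl.
Proof. unfold dl. lra. Qed.

Section H.
Variable h : R.
Hypothesis Hh : Rabs h < dl.

Definition rhoE c := p k (t + h + c) - p k (t + c) + h * INR (S k) * p (S k) (t + c).
Definition rhoE' c := - INR (S k) * p (S k) (t + h + c) - - INR (S k) * p (S k) (t + c)
   + h * INR (S k) * (- INR (S (S k)) * p (S (S k)) (t + c)).

Lemma habs : - dl < h < dl.
Proof. apply Rabs_def2 in Hh. lra. Qed.

Lemma rhoE_bounds c : ln (INR N) <= c -> 0 <= rhoE c <= C0 * h ^ 2.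
Proof.
  intro Hc. pose proof habs. pose proof dl_pos.
  assert (Hs : 2 * dl <= t + c) by (unfold dl in *; lra).
  assert (Hd : forall y, dl <= y -> derivable_pt_lim (p k) y (psi1 k y)).
  { intros y Hy. apply p_deriv. lra. }
  assert (Hm : forall y1 y2, dl <= y1 -> y1 <= y2 -> psi1 k y1 <= psi1 k y2).
  { intros. apply (psi1_mono k dl); lra. }
  pose proof (tangent (p k) (psi1 k) dl Hd Hm (t + c) (t + h + c) ltac:(lra) ltac:(lra)) as T1.
  pose proof (tangent (p k) (psi1 k) dl Hd Hm (t + h + c) (t + c) ltac:(lra) ltac:(lra)) as T2.
  assert (Hd2 : forall y, dl <= y -> derivable_pt_lim (psi1 k) y (psi2 k y)).
  { intros y Hy. apply psi1_deriv. lra. }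
  destruct (mvt_bet (psi1 k) (psi2 k) dl Hd2 (t + c) (t + h + c) ltac:(lra) ltac:(lra))
    as [xi [Hxi [_ Hmv]]].
  assert (P2 : 0 <= psi2 k xi <= C0).
  { unfold C0, psi2. pose proof (p_le (S (S k)) dl xi dl_pos Hxi).
    pose proof (p_pos (S (S k)) xi ltac:(lra)).
    assert (0 < INR (S k)) by (apply lt_0_INR; lia).
    assert (0 < INR (S (S k))) by (apply lt_0_INR; lia).
    assert (0 < INR (S k) * INR (S (S k))) by nra. split; nra. }
  unfold rhoE. unfold psi1 in *.
  replace (t + h + c - (t + c)) with h in * by ring.
  replace (t + c - (t + h + c)) with (- h) in * by ring.
  split.
  - nra.
  - assert (rhoE c <= h * (psi1 k (t + h + c) - psi1 k (t + c))) by (unfold rhoE, psi1; nra).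
    unfold rhoE, psi1 in H1. rewrite Hmv in H1.
    assert (h * (psi2 k xi * h) = psi2 k xi * h ^ 2) by ring.
    assert (0 <= h ^ 2) by (apply pow2_ge_0).
    nra.
Qed.

Lemma rhoE_deriv c : ln (INR N) <= c -> derivable_pt_lim rhoE c (rhoE' c).
Proof.
  intro Hc. pose proof habs. pose proof dl_pos.
  assert (Hs : 2 * dl <= t + c) by (unfold dl in *; lra).
  pose proof (p_deriv_shift k (t + h) c ltac:(lra)) as D1.
  pose proof (p_deriv_shift k t c ltac:(lra)) as D2.
  pose proof (p_deriv_shift (S k) t c ltac:(lra)) as D3.
  pose proof (derivable_pt_lim_plus _ _ _ _ _ (derivable_pt_lim_minus _ _ _ _ _ D1 D2)
     (derivable_pt_lim_scal _ (h * INR (S k)) _ _ D3)) as D.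
  exact D.
Qed.

Lemma rhoE'_nonpos c : ln (INR N) <= c -> rhoE' c <= 0.
Proof.
  intro Hc. pose proof habs. pose proof dl_pos.
  assert (Hs : 2 * dl <= t + c) by (unfold dl in *; lra).
  assert (Hd : forall y, dl <= y -> derivable_pt_lim (fun s => - psi1 k s) y (- psi2 k y)).
  { intros y Hy. apply mpsi1_deriv. lra. }
  assert (Hm : forall y1 y2, dl <= y1 -> y1 <= y2 -> - psi2 k y1 <= - psi2 k y2).
  { intros. apply (mpsi2_mono k dl); lra. }
  pose proof (tangent (fun s => - psi1 k s) (fun s => - psi2 k s) dl Hd Hm (t + c) (t + h + c)
     ltac:(lra) ltac:(lra)) as T.
  simpl in T. unfold psi1, psi2 in T. unfold rhoE'.
  replace (t + h + c - (t + c)) with h in T by ring.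
  nra.
Qed.

Lemma rhoE_mono c1 c2 : ln (INR N) <= c1 -> c1 <= c2 -> rhoE c2 <= rhoE c1.
Proof.
  intros. apply (decr_deriv rhoE rhoE' (ln (INR N))); auto.
  - intros. apply rhoE_deriv; auto.
  - intros. apply rhoE'_nonpos; auto.
Qed.

Let FE := fun x => rhoE (ln x).
Let gE := fun j => / (harm j - gamma + (t + h)) ^ (S k) - / (harm j - gamma + t) ^ (S k)
                 + h * INR (S k) * / (harm j - gamma + t) ^ (S (S k)).

Lemma pos_ln x : INR N <= x -> 0 < x /\ 2 * dl <= t + ln x.
Proof.
  intro Hx. pose proof (INRN_pos N HN). pose proof (lnN_le N HN x Hx). unfold dl. split; lra.
Qed.

Lemma FE_cont : forall x, INR N <= x -> continuity_pt FE x.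
Proof.
  intros x Hx. destruct (pos_ln x Hx). pose proof habs. pose proof dl_pos.
  unfold FE, rhoE.
  pose proof (f_cont k (t + h) x H ltac:(lra)) as C1.
  pose proof (f_cont k t x H ltac:(lra)) as C2.
  pose proof (f_cont (S k) t x H ltac:(lra)) as C3.
  exact (continuity_pt_plus _ _ _ (continuity_pt_minus _ _ _ C1 C2) (continuity_pt_scal _ (h * INR (S k)) _ C3)).
Qed.

Lemma gE_r : forall j, (N <= j)%nat -> gE j = rhoE (aa gamma j).
Proof.
  intros j Hj. unfold gE, rhoE, aa, p.
  replace (harm j - gamma + (t + h)) with (t + h + (harm j - gamma)) by ring.
  replace (harm j - gamma + t) with (t + (harm j - gamma)) by ring. reflexivity.
Qed.

Lemma E_identity n : (N <= n)%nat ->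
  theta_term gamma k (t + h) N n - theta_term gamma k t N n + h * INR (S k) * theta_term gamma (S k) t N n
  = Dn N FE gE n.
Proof.
  intro Hn. pose proof habs. pose proof dl_pos.
  assert (HnN : INR N <= INR n) by (apply le_INR; auto).
  pose proof (INRN_pos N HN).
  assert (Hex : forall s0 m, 0 < s0 + ln (INR N) -> ex_RInt (fun x => p m (s0 + ln x)) (INR N) (INR n)).
  { intros s0 m Hs0. apply (ex_RInt_cont _ (INR N)); [|lra|lra].
    intros x Hx. pose proof (lnN_le N HN x Hx). apply f_cont; lra. }
  unfold theta_term, Dn.
  rewrite !RInt_bridge.
  - unfold gE. rewrite ssum_lin. unfold FE, rhoE.
    rewrite (RInt_lin3 (fun x => p k (t + h + ln x)) (fun x => p k (t + ln x)) (fun x => p (S k) (t + ln x))).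
    + unfold p. ring.
    + apply Hex. unfold dl in *; lra.
    + apply Hex. unfold dl in *; lra.
    + apply Hex. unfold dl in *; lra.
  - apply (ex_RInt_cont _ (INR N)); [apply FE_cont|lra|lra].
  - apply Hex with (m := S k). unfold dl in *; lra.
  - apply Hex with (m := k). unfold dl in *; lra.
  - apply (Hex (t + h) k). unfold dl in *; lra.
Qed.

Lemma E_bound n : (N <= n)%nat ->
  Rabs (theta_term gamma k (t + h) N n - theta_term gamma k t N n
        + h * INR (S k) * theta_term gamma (S k) t N n) <= C0 * h ^ 2.
Proof.
  intro Hn. rewrite E_identity by auto.
  pose proof (tele N HN (aa gamma) (Ha_main gamma Hg N HN) FE gE rhoE FE_cont (fun x _ => eq_refl)
     gE_r rhoE_mono N n (Nat.le_refl N) Hn) as T.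
  rewrite (D_N N FE gE FE_cont), Rminus_0_r in T.
  pose proof (INRN_pos N HN).
  pose proof (rhoE_bounds (ln (INR N)) (Rle_refl _)).
  pose proof (rhoE_bounds (ln (INR n)) (lnN_le N HN _ (le_INR _ _ Hn))).
  lra.
Qed.

End H.
End Deriv.

Lemma C0_nonneg N k t : - ln (INR N) < t -> 0 <= C0 N k t.
Proof.
  intro Ht. unfold C0, psi2. pose proof (dl_pos N t Ht).
  pose proof (p_pos (S (S k)) _ H).
  assert (0 < INR (S k)) by (apply lt_0_INR; lia).
  assert (0 < INR (S (S k))) by (apply lt_0_INR; lia).
  assert (0 < INR (S k) * INR (S (S k))) by nra. nra.
Qed.

Definition Lf gamma N k t :=
  epsilon (inhabits 0) (fun l => Un_cv (fun n => theta_term gamma k t N n) l).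

Lemma Lf_spec gamma N k t : Un_cv (fun n => harm n - ln (INR n)) gamma -> (1 <= N)%nat ->
  - ln (INR N) < t -> Un_cv (fun n => theta_term gamma k t N n) (Lf gamma N k t).
Proof.
  intros Hg HN Ht. unfold Lf. apply epsilon_spec. apply (conv_main gamma Hg N HN k t Ht).
Qed.

Lemma cv_const c : Un_cv (fun _ => c) c.
Proof. intros eps He. exists 0%nat. intros. unfold Rdist. rewrite Rminus_diag, Rabs_R0. lra. Qed.

Lemma L_deriv gamma N k t : Un_cv (fun n => harm n - ln (INR n)) gamma -> (1 <= N)%nat ->
  - ln (INR N) < t -> derivable_pt_lim (Lf gamma N k) t (- INR (S k) * Lf gamma N (S k) t).
Proof.
  intros Hg HN Ht eps He.
  pose proof (dl_pos N t Ht) as Hdl. pose proof (C0_nonneg N k t Ht) as HC.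
  assert (Hq : 0 < eps / (C0 N k t + 1)) by (apply Rdiv_lt_0_compat; lra).
  exists (mkposreal (Rmin (dl N t) (eps / (C0 N k t + 1))) (Rmin_pos _ _ Hdl Hq)).
  intros h Hh0 Hh. simpl in Hh.
  assert (Hh1 : Rabs h < dl N t) by (eapply Rlt_le_trans; [exact Hh| apply Rmin_l]).
  assert (Hh2 : Rabs h < eps / (C0 N k t + 1)) by (eapply Rlt_le_trans; [exact Hh| apply Rmin_r]).
  assert (Hth : - ln (INR N) < t + h) by (apply Rabs_def2 in Hh1; unfold dl in Hh1; lra).
  set (E := Lf gamma N k (t + h) - Lf gamma N k t + h * INR (S k) * Lf gamma N (S k) t).
  assert (HE : Rabs E <= C0 N k t * h ^ 2).
  { apply (lim_abs_le_ev (fun n => theta_term gamma k (t + h) N n - theta_term gamma k t N n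
        + h * INR (S k) * theta_term gamma (S k) t N n) E _ N).
    - unfold E. apply CV_plus; [apply CV_minus|].
      + apply Lf_spec; auto.
      + apply Lf_spec; auto.
      + apply (CV_mult (fun _ => h * INR (S k))). apply cv_const. apply Lf_spec; auto.
    - intros n Hn. apply (E_bound gamma Hg N HN k t Ht h Hh1 n). lia. }
  replace ((Lf gamma N k (t + h) - Lf gamma N k t) / h - - INR (S k) * Lf gamma N (S k) t)
    with (E / h) by (unfold E; field; auto).
  assert (Hah : 0 < Rabs h) by (apply Rabs_pos_lt; auto).
  unfold Rdiv. rewrite Rabs_mult, Rabs_inv.
  apply Rle_lt_trans with (C0 N k t * Rabs h).
  - assert (Hsq : h ^ 2 = Rabs h * Rabs h).
    { rewrite <- Rabs_mult, Rabs_right; [ring| pose proof (pow2_ge_0 h); simpl in *; nra]. }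
    rewrite Hsq in HE.
    replace (C0 N k t * Rabs h) with (C0 N k t * (Rabs h * Rabs h) * / Rabs h) by (field; lra).
    apply Rmult_le_compat_r; [left; apply Rinv_0_lt_compat; lra| exact HE].
  - apply Rle_lt_trans with (C0 N k t * (eps / (C0 N k t + 1))).
    + apply Rmult_le_compat_l; lra.
    + replace (C0 N k t * (eps / (C0 N k t + 1))) with (eps * (C0 N k t / (C0 N k t + 1))) by (field; lra).
      assert (C0 N k t / (C0 N k t + 1) < 1).
      { apply (Rmult_lt_reg_r (C0 N k t + 1)); [lra|]. unfold Rdiv. rewrite Rmult_assoc, Rinv_l by lra. lra. }
      nra.
Qed.

Theorem proposition3p8 :
  forall (N : nat), (1 <= N)%nat ->
  forall (gamma : R), Un_cv (fun n => harm n - ln (INR n)) gamma ->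
  exists L : nat -> R -> R,
    (forall (k : nat) (t : R), - ln (INR N) < t ->
       Un_cv (fun n => theta_term gamma k t N n) (L k t)) /\
    exists D : nat -> R -> R,
      (forall t : R, - ln (INR N) < t -> D 0%nat t = L 0%nat t) /\
      (forall (k : nat) (t : R), - ln (INR N) < t ->
         derivable_pt_lim (D k) t (D (S k) t)) /\
      (forall (k : nat) (t : R), - ln (INR N) < t ->
         (-1) ^ k * D k t = INR (fact k) * L k t /\
         INR (fact k) * L k t > 0).
Proof.
  intros N HN gamma Hg.
  exists (Lf gamma N). split.
  { intros k t Ht. apply Lf_spec; auto. }
  exists (fun k t => (-1) ^ k * INR (fact k) * Lf gamma N k t).
  split; [|split].
  - intros t Ht. simpl. ring.
  - intros k t Ht.
    pose proof (derivable_pt_lim_scal _ ((-1) ^ k * INR (fact k)) _ _ (L_deriv gamma N k t Hg HN Ht)) as D.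
    unfold mult_real_fct in D.
    replace ((-1) ^ S k * INR (fact (S k)) * Lf gamma N (S k) t) with
      ((-1) ^ k * INR (fact k) * (- INR (S k) * Lf gamma N (S k) t)).
    + exact D.
    + rewrite fact_simpl, mult_INR. simpl. ring.
  - intros k t Ht. split.
    + replace ((-1) ^ k * ((-1) ^ k * INR (fact k) * Lf gamma N k t))
        with (((-1) * (-1)) ^ k * INR (fact k) * Lf gamma N k t)
        by (rewrite Rpow_mult_distr; ring).
      replace ((-1) * (-1)) with 1 by ring. rewrite pow1. ring.
    + pose proof (pos_main gamma Hg N HN k t Ht _ (Lf_spec gamma N k t Hg HN Ht)).
      assert (0 < INR (fact k)) by (apply lt_0_INR, lt_O_fact).
      apply Rlt_gt. apply Rmult_lt_0_compat; auto.
Qed.
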